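(* Let $S$ be an $(l,r)$-framed algebra, $\lambda^1,\lambda^2,\lambda^3\in\mathrm{IS}^{(l,r)}$ and $a_i\in S_{\lambda^i}$. Then: (1) for $\lambda^0\in\lambda^1\star\lambda^2$, $a_1\cdot_{\lambda^0}a_2=(-1)^{s(\lambda^0)+s(\lambda^1)+s(\lambda^2)}a_2\cdot_{\lambda^0}a_1$; (2) for $\lambda^0\in\mathrm{IS}^{(l,r)}$ and $\mu'\in A(\lambda^0,\lambda^1,\lambda^2,\lambda^3)$, $a_1\cdot_{\lambda^0}(a_2\cdot_{\mu'}a_3)=\sum_{\mu\in A(\lambda^0,\lambda^3,\lambda^1,\lambda^2)}(-1)^{s(\mu')+s(\mu)+s(\lambda^2)+s(\lambda^0)}B^{\mu,\mu'}_{\lambda^0,\lambda^3,\lambda^1,\lambda^2}(a_1\cdot_\mu a_2)\cdot_{\lambda^0}a_3$.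
   Context: Let $\mathrm{IS}=\{0,\frac12,\frac1{16}\}$ with fusion rule $\star$ (values are subsets of $\mathrm{IS}$): $0\star h=h\star 0=\{h\}$, $\frac12\star\frac12=\{0\}$, $\frac12\star\frac1{16}=\frac1{16}\star\frac12=\{\frac1{16}\}$, $\frac1{16}\star\frac1{16}=\{0,\frac12\}$. For $h_0,\dots,h_3\in\mathrm{IS}$ put $A(h_0,h_1,h_2,h_3)=\{h: h\in h_2\star h_3,\ h_0\in h_1\star h\}$. For $h\in A(h_0,h_1,h_2,h_3)$, $h'\in A(h_0,h_2,h_1,h_3)$ define $B^{h,h'}_{h_0,h_1,h_2,h_3}\in\mathbb{C}$ by: $B_{*,0,*,*}=B_{*,*,0,*}=1$; $B_{*,\frac12,\frac12,*}=-1$; $B_{a,\frac12,\frac1{16},a'}=B_{a,\frac1{16},\frac12,a'}=i$ if $a$ or $a'$ equals $\frac12$, $-i$ otherwise; $B^{b,b'}_{a,\frac1{16},\frac1{16},a'}=e^{-\pi i/8}$ times: $1$ if $a,a'\ne\frac1{16}$, $a=a'$; $i$ if $a,a'\ne\frac1{16}$, $a\neq a'$; $\frac{1+i}2$ if $a=a'=\frac1{16}$, $b=b'$; $\frac{1-i}2$ if $a=a'=\frac1{16}$, $b\ne b'$. For $l,r\ge0$ let $\mathrm{IS}^{(l,r)}=\mathrm{IS}^l\times\mathrm{IS}^r$, $\lambda=(h_1,\dots,h_l,\bar h_1,\dots,\bar h_r)$, $s(\lambda)=\sum h_i-\sum \bar h_j$; $\star$ and $A$ are extended componentwise, and $B^{\lambda,\lambda'}_{\lambda^0,\lambda^1,\lambda^2,\lambda^3}=\prod_{i\le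 l}B^{h_i,h_i'}_{h^0_i,h^1_i,h^2_i,h^3_i}\prod_{j\le r}\overline{B^{\bar h_j,\bar h_j'}_{\bar h^0_j,\bar h^1_j,\bar h^2_j,\bar h^3_j}}$. An $(l,r)$-framed algebra is a finite-dimensional $\mathrm{IS}^{(l,r)}$-graded complex vector space $S=\bigoplus S_\lambda$ with bilinear product $\cdot$ and nonzero $1\in S_0$, writing $a\cdot_\lambda b$ for the $S_\lambda$-component of $a\cdot b$, such that (FA1) $S_\lambda=0$ unless $s(\lambda)\in\mathbb{Z}$; (FA2) $S_0=\mathbb{C}1$, $1$ is a two-sided unit; (FA3) $S_{\lambda^1}\cdot S_{\lambda^2}\subset\bigoplus_{\lambda\in\lambda^1\star\lambda^2}S_\lambda$; (FA4) for $a_i\in S_{\lambda^i}$ and $\lambda'\in A(\lambda^0,\lambda^2,\lambda^1,\lambda^3)$: $a_2\cdot_{\lambda^0}(a_1\cdot_{\lambda'}a_3)=\sum_{\lambda\in A(\lambda^0,\lambda^1,\lambda^2,\lambda^3)}B^{\lambda,\lambda'}_{\lambda^0,\lambda^1,\lambda^2,\lambda^3}a_1\cdot_{\lambda^0}(a_2\cdot_\lambda a_3)$. *)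

(* Defs.v *)
From HB Require Import structures.
From mathcomp Require Import all_boot all_order all_algebra.
From mathcomp Require Import reals.
From mathcomp Require Import complex.
Set Implicit Arguments. Unset Strict Implicit. Unset Printing Implicit Defensive.
Import Order.TTheory GRing.Theory Num.Theory.
Local Open Scope ring_scope.

Inductive IS := h0 | hhalf | h16.

Definition IS_code (h : IS) : 'I_3 :=
  match h with h0 => inord 0 | hhalf => inord 1 | h16 => inord 2 end.
Definition IS_decode (i : 'I_3) : IS :=
  match val i with 0 => h0 | 1 => hhalf | _ => h16 end.
Lemma IS_codeK : cancel IS_code IS_decode.
Proof. by case; rewrite /IS_decode /= inordK. Qed.
HB.instance Definition _ := Finite.copy IS (can_type IS_codeK).

Definition hval (h : IS) : rat :=
  match h with h0 => 0 | hhalf => 1/2 | h16 => 1/16 end.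

(* fusion rule: fus a b h  <=>  h \in a * b *)
Definition fus (a b h : IS) : bool :=
  match a, b with
  | h0, _ => h == b
  | _, h0 => h == a
  | hhalf, hhalf => h == h0
  | hhalf, h16 | h16, hhalf => h == h16
  | h16, h16 => (h == h0) || (h == hhalf)
  end.

Definition Aset (a0 a1 a2 a3 h : IS) : bool := fus a2 a3 h && fus a1 h a0.

(* e^{-pi i/8} = cos(pi/8) - i sin(pi/8) *)
Definition zeta16 (R : realType) : R[i] :=
  Complex (Num.sqrt (2 + Num.sqrt 2) / 2) (- (Num.sqrt (2 - Num.sqrt 2) / 2)).

Definition iC (R : realType) : R[i] := Complex 0 1.

(* B^{h,h'}_{a0,a1,a2,a3}  (value 0 on index combinations where it is undefined) *)
Definition Bval (R : realType) (h h' a0 a1 a2 a3 : IS) : R[i] :=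
  match a1, a2 with
  | h0, _ | _, h0 => 1
  | hhalf, hhalf => -1
  | hhalf, h16 | h16, hhalf =>
      if (a0 == hhalf) || (a3 == hhalf) then iC R else - iC R
  | h16, h16 =>
      zeta16 R *
      (if (a0 != h16) && (a3 != h16) then
         (if a0 == a3 then 1 else iC R)
       else if (a0 == h16) && (a3 == h16) then
         (if h == h' then (1 + iC R) / 2 else (1 - iC R) / 2)
       else 0)
  end.

Definition Lam (l r : nat) := ({ffun 'I_l -> IS} * {ffun 'I_r -> IS})%type.

Definition lam0 (l r : nat) : Lam l r := ([ffun => h0], [ffun => h0]).

Definition s_of (l r : nat) (la : Lam l r) : rat :=
  \sum_(i < l) hval (la.1 i) - \sum_(j < r) hval (la.2 j).

Definition fusL (l r : nat) (la1 la2 la : Lam l r) : bool :=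
  [forall i, fus (la1.1 i) (la2.1 i) (la.1 i)] &&
  [forall j, fus (la1.2 j) (la2.2 j) (la.2 j)].

Definition AL (l r : nat) (la0 la1 la2 la3 la : Lam l r) : bool :=
  fusL la2 la3 la && fusL la1 la la0.

Definition BL (R : realType) (l r : nat) (la la' la0 la1 la2 la3 : Lam l r) : R[i] :=
  (\prod_(i < l) Bval R (la.1 i) (la'.1 i) (la0.1 i) (la1.1 i) (la2.1 i) (la3.1 i)) *
  (\prod_(j < r) (Bval R (la.2 j) (la'.2 j) (la0.2 j) (la1.2 j) (la2.2 j) (la3.2 j))^*).

(* (-1)^q for q \in Z (q rational); for non-integral q we use floor q, a value
   that never matters. *)
Definition sgnq (R : realType) (q : rat) : R[i] := (-1) ^ (Num.floor q).

(* An (l,r)-framed algebra, presented through its homogeneous components: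
   V la = S_la (finite-dimensional), mul la1 la2 la a b = a .la b (the
   S_la-component of a.b for a \in S_la1, b \in S_la2), one = 1 \in S_0. *)
Definition is_framed_algebra (R : realType) (l r : nat)
    (V : Lam l r -> vectType R[i])
    (mul : forall la1 la2 la : Lam l r, V la1 -> V la2 -> V la)
    (one : V (lam0 l r)) : Prop :=
  (forall la1 la2 la (b : V la2), linear (fun a : V la1 => mul la1 la2 la a b)) /\
  (forall la1 la2 la (a : V la1), linear (fun b : V la2 => mul la1 la2 la a b)) /\
  (forall la, s_of la \isn't a Num.int -> forall v : V la, v = 0) /\
  one != 0 /\ (forall v : V (lam0 l r), exists c : R[i], v = c *: one) /\
  (forall la (a : V la), mul (lam0 l r) la la one a = a) /\
  (forall la (a : V la), mul la (lam0 l r) la a one = a) /\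
  (forall la1 la2 la (a : V la1) (b : V la2), ~~ fusL la1 la2 la -> mul la1 la2 la a b = 0) /\
  (forall la0 la1 la2 la3 la' (a1 : V la1) (a2 : V la2) (a3 : V la3),
     AL la0 la2 la1 la3 la' ->
     mul la2 la' la0 a2 (mul la1 la3 la' a1 a3) =
     \sum_(la | AL la0 la1 la2 la3 la)
        BL R la la' la0 la1 la2 la3 *: mul la1 la la0 a1 (mul la2 la3 la a2 a3)).

(* Main.v *)
Require Import Defs.
From HB Require Import structures.
From mathcomp Require Import all_boot all_order all_algebra.
From mathcomp Require Import reals complex.
From mathcomp Require Import ring lra.
Import Order.TTheory GRing.Theory Num.Theory.
Local Open Scope ring_scope.

Lemma IS_eqE (x y : IS) : (x == y) = match x, y with h0,h0|hhalf,hhalf|h16,h16 => true | _,_ => false end.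
Proof. by case: x; case: y; rewrite ?eqxx //; apply/eqP. Qed.
Definition kk (x y z : IS) : int :=
  match x, y with
  | h0, _ | _, h0 => 0
  | hhalf, hhalf => 8
  | hhalf, h16 | h16, hhalf => 4
  | h16, h16 => if z == h0 then 1 else -3
  end.
Lemma fus_sym x y z : fus x y z = fus y x z.
Proof. by case: x; case: y; case: z; rewrite /= !IS_eqE. Qed.
Lemma fus_x0 x z : fus x h0 z = (z == x).
Proof. by case: x; case: z; rewrite /= !IS_eqE. Qed.
Lemma kk_rat x y z : fus x y z -> (kk x y z)%:~R = 8 * (hval x + hval y - hval z) :> rat.
Proof. by case: x; case: y; case: z; rewrite /= ?IS_eqE //= => _; apply/eqP; vm_compute. Qed.

Section Z.
Variable R : realType.
Local Notation z := (zeta16 R).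
Lemma sq2_le2 : Num.sqrt (2:R) <= 2.
Proof. have h1 := sqr_sqrtr (ler0n R 2). have h2 := sqrtr_ge0 (2:R).
move: h1 h2; set t := Num.sqrt _ => h1 h2. rewrite expr2 in h1. nra. Qed.
Lemma zeta2 : zeta16 R ^+ 2 = Complex (Num.sqrt 2 / 2) (- (Num.sqrt 2 / 2)).
Proof.
rewrite expr2 /zeta16.
rewrite -[(_ +i* _)%C * (_ +i* _)%C]/(_ +i* _)%C.
have t0 := sqrtr_ge0 (2:R). have tt := sqr_sqrtr (ler0n R 2).
have le := sq2_le2.
have p0 : 0 <= 2 + Num.sqrt (2:R) by lra.
have m0 : 0 <= 2 - Num.sqrt (2:R) by lra.
have ha := sqr_sqrtr p0. have hb := sqr_sqrtr m0.
have hab : Num.sqrt (2 + Num.sqrt 2) * Num.sqrt (2 - Num.sqrt 2) = Num.sqrt (2:R).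
  rewrite -sqrtrM //; congr Num.sqrt; rewrite !expr2 in tt *; nra.
move: ha hb hab tt t0 le; set t := Num.sqrt 2; set a := Num.sqrt (2 + t); set b := Num.sqrt (2 - t).
move=> ha hb hab tt t0 le.
rewrite !expr2 in ha hb.
congr Complex; nra.
Qed.
Lemma zeta4 : z ^+ 4 = - iC R.
Proof.
rewrite (_ : 4 = 2 * 2)%N // exprM zeta2 expr2 /iC.
rewrite -[(_ +i* _)%C * (_ +i* _)%C]/(_ +i* _)%C.
have tt := sqr_sqrtr (ler0n R 2). move: tt; set t := Num.sqrt 2 => tt.
rewrite !expr2 in tt.
rewrite -[- (_ +i* _)%C]/(_ +i* _)%C.
congr Complex; nra.
Qed.
Lemma iC2 : iC R ^+ 2 = -1.
Proof. exact: sqr_i. Qed.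
Lemma zeta8 : z ^+ 8 = -1.
Proof. by rewrite (_ : 8 = 4 * 2)%N // exprM zeta4 sqrrN iC2. Qed.
Lemma zeta16_1 : z ^+ 16 = 1.
Proof. by rewrite (_ : 16 = 8 * 2)%N // exprM zeta8 sqrrN expr1n. Qed.
Lemma zeta_neq0 : z != 0.
Proof. apply/negP => /eqP h; move: zeta16_1; rewrite h expr0n => /eqP; by rewrite eq_sym oner_eq0. Qed.
Lemma zeta_unit : z \is a GRing.unit.
Proof. by rewrite unitfE zeta_neq0. Qed.
Lemma norm_zeta : `|z| = 1.
Proof.
apply/eqP; rewrite -(pexpr_eq1 (n:=16)) // -normrX zeta16_1 normr1 //.
Qed.
Lemma conj_zeta : z^* = z^-1.
Proof. by rewrite invC_norm norm_zeta expr1n invr1 mul1r. Qed.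
Lemma conj_zetaz (k : int) : (z ^ k)^* = z ^ (- k).
Proof. by rewrite (rmorphXz Num.conj_op k zeta_unit) /= conj_zeta exprz_inv. Qed.
Lemma zetaz8 : z ^ (8 : int) = -1.
Proof. by rewrite -exprnP zeta8. Qed.
Lemma zetaz4 : z ^ (4 : int) = - iC R.
Proof. by rewrite -exprnP zeta4. Qed.

Lemma Bval_kk h h' x y w : fus x y w -> Bval R h h' w x y h0 = z ^ (kk x y w).
Proof.
case: x; case: y; case: w; rewrite /= ?IS_eqE //= => _.
all: rewrite ?expr0z ?zetaz8 ?zetaz4 ?expr1z ?mulr1 //.
rewrite (_ : -3 = 1 + (- 4)) // expfzDr ?zeta_neq0 // -invr_expz zetaz4 expr1z.
congr (_ * _); symmetry; apply: mulr1_eq.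
by rewrite mulNr -expr2 iC2 opprK.
Qed.
End Z.

Section BLsec.
Variables (R : realType) (l r : nat).
Local Notation z := (zeta16 R).
Implicit Types A B C : Lam l r.

Lemma fusL_sym A B C : fusL A B C = fusL B A C.
Proof. by rewrite /fusL; congr andb; apply: eq_forallb => i; rewrite fus_sym. Qed.

Lemma fusL_lam0 A C : fusL A (lam0 l r) C = (C == A).
Proof.
rewrite /fusL /lam0 /=.
have e1 : [forall i, fus (A.1 i) (([ffun=> h0] : {ffun 'I_l -> IS}) i) (C.1 i)] = (C.1 == A.1).
  apply/forallP/eqP => [h|->] ; last by move=> i; rewrite ffunE fus_x0.
  by apply/ffunP => i; apply/eqP; move: (h i); rewrite ffunE fus_x0.
have e2 : [forall i, fus (A.2 i) (([ffun=> h0] : {ffun 'I_r -> IS}) i) (C.2 i)] = (C.2 == A.2).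
  apply/forallP/eqP => [h|->] ; last by move=> i; rewrite ffunE fus_x0.
  by apply/ffunP => i; apply/eqP; move: (h i); rewrite ffunE fus_x0.
by rewrite e1 e2.
Qed.

Definition Kf B A C : int :=
  \sum_(i < l) kk (B.1 i) (A.1 i) (C.1 i) - \sum_(j < r) kk (B.2 j) (A.2 j) (C.2 j).

Lemma zexp_sum I (s : seq I) (P : pred I) (F : I -> int) :
  \prod_(i <- s | P i) z ^ (F i) = z ^ (\sum_(i <- s | P i) F i).
Proof.
apply: esym; apply: (big_morph (fun k : int => z ^ k)).
  by move=> x y; rewrite expfzDr // zeta_neq0.
by rewrite expr0z.
Qed.

Lemma BL_swap A B C : fusL B A C -> BL R A B C B A (lam0 l r) = z ^ (Kf B A C).
Proof.
move=> /andP [/forallP h1 /forallP h2].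
rewrite /BL /Kf.
under eq_bigr do rewrite ffunE Bval_kk ?h1 //.
under [X in _ * X]eq_bigr do rewrite ffunE Bval_kk ?h2 // conj_zetaz.
by rewrite !zexp_sum sumrN -expfzDr // zeta_neq0.
Qed.

Lemma Kf_rat A B C : fusL B A C -> (Kf B A C)%:~R = 8 * (s_of B + s_of A - s_of C) :> rat.
Proof.
move=> /andP [/forallP h1 /forallP h2].
rewrite /Kf /s_of rmorphB !rmorph_sum /=.
under eq_bigr do rewrite kk_rat ?h1 //.
under [X in _ - X]eq_bigr do rewrite kk_rat ?h2 //.
rewrite -!mulr_sumr !sumrB !big_split /=.
ring.
Qed.
End BLsec.

Section Sgn.
Variable R : realType.
Local Notation z := (zeta16 R).

Lemma m1_shift (a b : int) : (-1 : R[i]) ^ (a + 2 * b) = (-1) ^ a.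
Proof.
rewrite expfzDr ?oppr_eq0 ?oner_eq0 // -exprz_exp -exprnP sqrrN expr1n.
by rewrite exp1rz mulr1.
Qed.

Lemma sgnq_shift (x : rat) (m : int) : sgnq R (x + m%:~R) = sgnq R x * (-1) ^ m.
Proof.
rewrite /sgnq floorDrz ?intr_int // intrKfloor expfzDr // oppr_eq0 oner_eq0 //.
Qed.

Lemma sgnq_int (m : int) : sgnq R m%:~R = (-1) ^ m.
Proof. by rewrite /sgnq intrKfloor. Qed.

Lemma zK (K m : int) : K%:~R = 8 * m%:~R :> rat -> z ^ K = (-1) ^ m.
Proof.
move=> h.
have -> : K = 8 * m by apply: (@intr_inj rat); rewrite h rmorphM.
by rewrite -exprz_exp zetaz8.
Qed.
End Sgn.

Section Alg.
Variables (R : realType) (l r : nat) (V : Lam l r -> vectType R[i])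
  (mul : forall la1 la2 la : Lam l r, V la1 -> V la2 -> V la)
  (one : V (lam0 l r)).
Hypothesis HS : is_framed_algebra mul one.

Lemma mulV0l la1 la2 la (b : V la2) : mul la1 la2 la 0 b = 0.
Proof.
have [HL _] := HS.
have := HL la1 la2 la b 1 0 0; rewrite !scale1r addr0 /= => h.
by apply/(addrI (mul la1 la2 la 0 b)); rewrite addr0 -h.
Qed.

Lemma mulV0r la1 la2 la (a : V la1) : mul la1 la2 la a 0 = 0.
Proof.
have [_ [HR _]] := HS.
have := HR la1 la2 la a 1 0 0; rewrite !scale1r addr0 /= => h.
by apply/(addrI (mul la1 la2 la a 0)); rewrite addr0 -h.
Qed.

Lemma mulrZ la1 la2 la (a : V la1) c (b : V la2) : mul la1 la2 la a (c *: b) = c *: mul la1 la2 la a b.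
Proof.
have [_ [HR _]] := HS.
by have := HR la1 la2 la a c b 0; rewrite !addr0 mulV0r addr0.
Qed.

Lemma mulr_sum la1 la2 la (a : V la1) I (s : seq I) (P : pred I) (F : I -> V la2) :
  mul la1 la2 la a (\sum_(i <- s | P i) F i) = \sum_(i <- s | P i) mul la1 la2 la a (F i).
Proof.
have [_ [HR _]] := HS.
apply: (big_morph (fun b => mul la1 la2 la a b)); last exact: mulV0r.
by move=> x y; have := HR la1 la2 la a 1 x y; rewrite !scale1r.
Qed.

Lemma nonint0 la (v : V la) : s_of la \isn't a Num.int -> v = 0.
Proof. by have [_ [_ [H _]]] := HS; move=> h; apply: H. Qed.

Lemma part1 la1 la2 la0 (a1 : V la1) (a2 : V la2) : fusL la1 la2 la0 ->
  mul la1 la2 la0 a1 a2 = sgnq R (s_of la0 + s_of la1 + s_of la2) *: mul la2 la1 la0 a2 a1.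
Proof.
move=> hf.
have [_ [_ [_ [_ [_ [Hu1 [Hu2 [_ H4]]]]]]]] := HS.
have hal : AL la0 la1 la2 (lam0 l r) la2 by rewrite /AL fusL_lam0 eqxx hf.
have := H4 la0 la2 la1 (lam0 l r) la2 a2 a1 one hal.
rewrite Hu2.
have E : forall la, AL la0 la2 la1 (lam0 l r) la = (la == la1).
  move=> la; rewrite /AL fusL_lam0; case: eqP => [->|] //=.
  by rewrite fusL_sym.
rewrite (eq_bigl _ _ E) big_pred1_eq Hu2 => ->.
suff : (mul la2 la1 la0 a2 a1 = 0) \/ BL R la1 la2 la0 la2 la1 (lam0 l r) = sgnq R (s_of la0 + s_of la1 + s_of la2).
  by case=> ->; rewrite ?scaler0.
have [i0|ni0] := boolP (s_of la0 \is a Num.int); last by left; apply: nonint0.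
have [i1|ni1] := boolP (s_of la1 \is a Num.int); last by left; rewrite (@nonint0 _ a1 ni1) mulV0r.
have [i2|ni2] := boolP (s_of la2 \is a Num.int); last by left; rewrite (@nonint0 _ a2 ni2) mulV0l.
right.
have hf' : fusL la2 la1 la0 by rewrite fusL_sym.
rewrite BL_swap //.
move: (@Kf_rat l r _ _ _ hf').
case/intrP: i0 => m0 ->; case/intrP: i1 => m1 ->; case/intrP: i2 => m2 -> hK.
rewrite -!rmorphD sgnq_int.
rewrite (@zK R _ (m2 + m1 - m0)); last by rewrite hK !rmorphD rmorphN.
by rewrite -(@m1_shift R (m2 + m1 - m0) m0); congr (_ ^ _); ring.
Qed.

Lemma part2 la1 la2 la3 (a1 : V la1) (a2 : V la2) (a3 : V la3) la0 mu' :
  AL la0 la1 la2 la3 mu' ->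
     mul la1 mu' la0 a1 (mul la2 la3 mu' a2 a3) =
     \sum_(mu | AL la0 la3 la1 la2 mu)
        (sgnq R (s_of mu' + s_of mu + s_of la2 + s_of la0)
         * BL R mu mu' la0 la3 la1 la2) *: mul mu la3 la0 (mul la1 la2 mu a1 a2) a3.
Proof.
move=> /andP [f23 f1m].
have [_ [_ [_ [_ [_ [Hu1 [Hu2 [_ H4]]]]]]]] := HS.
rewrite (@part1 _ _ _ a2 a3 f23) mulrZ.
have hal : AL la0 la1 la3 la2 mu' by rewrite /AL fusL_sym f23 f1m.
rewrite (H4 la0 la3 la1 la2 mu' a3 a1 a2 hal) scaler_sumr.
apply: eq_bigr => mu /andP [f12 f3m].
rewrite (@part1 _ _ _ a3 _ f3m) !scalerA.
set W := mul mu la3 la0 (mul la1 la2 mu a1 a2) a3.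
set B := BL _ _ _ _ _ _ _.
suff : W = 0 \/ sgnq R (s_of mu' + s_of la2 + s_of la3) * sgnq R (s_of la0 + s_of la3 + s_of mu)
   = sgnq R (s_of mu' + s_of mu + s_of la2 + s_of la0).
  case=> [->|h]; first by rewrite !scaler0.
  by rewrite mulrCA h mulrC.
have [i0|ni0] := boolP (s_of la0 \is a Num.int); last by left; apply: nonint0.
have [i3|ni3] := boolP (s_of la3 \is a Num.int); last by left; rewrite /W (@nonint0 _ a3 ni3) mulV0r.
have [i1|ni1] := boolP (s_of la1 \is a Num.int); last by left; rewrite /W (@nonint0 _ a1 ni1) !mulV0l.
have [i2|ni2] := boolP (s_of la2 \is a Num.int); last by left; rewrite /W (@nonint0 _ a2 ni2) mulV0r mulV0l.
have [im|nim] := boolP (s_of mu \is a Num.int); last by left; rewrite /W (@nonint0 _ (mul la1 la2 mu a1 a2) nim) mulV0l.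
right.
case/intrP: i0 => m0 ->; case/intrP: i2 => m2 ->.
case/intrP: i3 => m3 ->; case/intrP: im => mm ->.
move: (s_of mu') => x; rewrite -!addrA -!rmorphD !sgnq_shift sgnq_int.
rewrite -mulrA -expfzDr ?oppr_eq0 ?oner_eq0 //; congr (_ * _).
by rewrite -(@m1_shift R (mm + (m2 + m0)) m3); congr (_ ^ _); ring.
Qed.
End Alg.

Theorem mainTheorem2 (R : realType) (l r : nat)
    (V : Lam l r -> vectType R[i])
    (mul : forall la1 la2 la : Lam l r, V la1 -> V la2 -> V la)
    (one : V (lam0 l r))
    (HS : is_framed_algebra mul one)
    (la1 la2 la3 : Lam l r) (a1 : V la1) (a2 : V la2) (a3 : V la3) :
  (forall la0 : Lam l r, fusL la1 la2 la0 ->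
     mul la1 la2 la0 a1 a2 =
     sgnq R (s_of la0 + s_of la1 + s_of la2) *: mul la2 la1 la0 a2 a1) /\
  (forall (la0 mu' : Lam l r), AL la0 la1 la2 la3 mu' ->
     mul la1 mu' la0 a1 (mul la2 la3 mu' a2 a3) =
     \sum_(mu | AL la0 la3 la1 la2 mu)
        (sgnq R (s_of mu' + s_of mu + s_of la2 + s_of la0)
         * BL R mu mu' la0 la3 la1 la2) *: mul mu la3 la0 (mul la1 la2 mu a1 a2) a3).
Proof.
split.
- by move=> la0 h; exact: (@part1 R l r V mul one HS).
- by move=> la0 mu' h; exact: (@part2 R l r V mul one HS).
Qed.
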